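(* A shift space $X$ is eventually dendric if and only if there is an integer $n\ge 0$ such that every word $w\in LS_{\ge n}(X)$ has exactly one letter $b\in A$ with $wb\in LS(X)$ (equivalently $wb\in LS_{\ge n+1}(X)$), and this letter moreover satisfies $\ell(wb)=\ell(w)$.
   Context: $A$ is a finite alphabet; a shift space is a closed shift-invariant subset $X\subseteq A^{\mathbb Z}$; $\mathcal L(X)$ is its set of finite factors, $\mathcal L_n(X)=\mathcal L(X)\cap A^n$, $\mathcal L_{\ge n}(X)=\bigcup_{k\ge n}\mathcal L_k(X)$. For $w\in\mathcal L(X)$, $L_1(w)=\{a\in A: aw\in\mathcal L(X)\}$, $R_1(w)=\{b\in A: wb\in\mathcal L(X)\}$, $\ell(w)=\mathrm{Card}\,L_1(w)$. A word $w$ is left-special if $\ell(w)\ge 2$; $LS_n(X)$ (resp. $LS_{\ge n}(X)$) is the set of left-special words of $\mathcal L(X)$ of length $n$ (resp. at least $n$), and $LS(X)=\bigcup_{n\ge1}LS_n(X)$. The extension graph $\mathcal E_1(w)$ is the undirected bipartite graph with vertex set the disjoint union of $L_1(w)$ and $R_1(w)$ and an edge $(a,b)$ iff $awb\in\mathcal L(X)$. $X$ is eventually dendric with threshold $m\ge0$ if $\mathcal E_1(w)$ is a tree for every $w\in\mathcal L_{\ge m}(X)$, and eventually dendric if this holds for some $m$. *)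

(* Defs.v *)
From Stdlib Require Import ZArith ClassicalEpsilon.
From mathcomp Require Import all_boot.
Set Implicit Arguments. Unset Strict Implicit. Unset Printing Implicit Defensive.

Section Shifts.
Variable A : finType.

Definition config := Z -> A.

Definition shift (x : config) : config := fun i => x (i + 1)%Z.

(* X is closed in the product topology of A^Z (A discrete): any configuration
   which agrees with an element of X on every central window [-n,n] is in X. *)
Definition closed_set (X : config -> Prop) : Prop :=
  forall x : config,
    (forall n : nat, exists y, X y /\ forall i : Z, (Z.abs i <= Z.of_nat n)%Z -> y i = x i) ->
    X x.

Definition shift_invariant (X : config -> Prop) : Prop :=
  (forall x, X x -> X (shift x)) /\ (forall x, X (shift x) -> X x).

Definition shift_space (X : config -> Prop) : Prop :=
  closed_set X /\ shift_invariant X.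

Definition occurs_at (x : config) (i : Z) (w : seq A) : Prop :=
  [seq x (i + Z.of_nat k)%Z | k <- iota 0 (size w)] = w.

Definition asb (P : Prop) : bool :=
  if excluded_middle_informative P then true else false.

Definition Lang (X : config -> Prop) (w : seq A) : bool :=
  asb (exists x i, X x /\ occurs_at x i w).

Definition L1 X (w : seq A) : {set A} := [set a | Lang X (a :: w)].
Definition R1 X (w : seq A) : {set A} := [set b | Lang X (rcons w b)].
Definition ell X (w : seq A) : nat := #|L1 X w|.

(* left-special words (of any length, including possibly the empty word) *)
Definition left_special X (w : seq A) : bool := Lang X w && (2 <= ell X w).

(* w \in LS(X) = union of LS_n(X), n >= 1 *)
Definition in_LS X (w : seq A) : bool := left_special X w && (1 <= size w).

Definition in_LS_ge X (n : nat) (w : seq A) : bool := left_special X w && (n <= size w).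

(* Extension graph E_1(w): vertex set L1(w) (tagged inl) disjoint union
   R1(w) (tagged inr); undirected edge {inl a, inr b} iff a w b \in L(X). *)
Definition ext_vert X (w : seq A) : pred (A + A) :=
  fun u => match u with inl a => a \in L1 X w | inr b => b \in R1 X w end.

Definition ext_edge X (w : seq A) : rel (A + A) :=
  fun u v => match u, v with
             | inl a, inr b => Lang X (a :: rcons w b)
             | inr b, inl a => Lang X (a :: rcons w b)
             | _, _ => false
             end.

End Shifts.

(* A finite simple undirected graph given by a vertex predicate V and a
   symmetric irreflexive edge relation e (restricted to V) is a tree iff it is
   nonempty, connected, and has no cycle (a cycle = closed walk through >= 3
   pairwise distinct vertices). *)
Definition is_tree (T : finType) (V : pred T) (e : rel T) : Prop :=
  let e' := [rel u v | [&& V u, V v & e u v]] in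
  (exists v, V v) /\
  (forall u v, V u -> V v -> connect e' u v) /\
  (forall c : seq T, uniq c -> 3 <= size c -> ~~ cycle e' c).

Definition ext_tree (A : finType) (X : config A -> Prop) (w : seq A) : Prop :=
  is_tree (ext_vert X w) (ext_edge X w).

Definition eventually_dendric_thr (A : finType) (X : config A -> Prop) (m : nat) : Prop :=
  forall w : seq A, Lang X w -> m <= size w -> ext_tree X w.

Definition eventually_dendric (A : finType) (X : config A -> Prop) : Prop :=
  exists m : nat, eventually_dendric_thr X m.

(* Main.v *)
Require Import Defs.
From Stdlib Require Import ZArith Lia ClassicalEpsilon Classical.
From mathcomp Require Import all_boot zify.
Set Implicit Arguments. Unset Strict Implicit. Unset Printing Implicit Defensive.

Section Lang.
Variable A : finType.
Variable X : config A -> Prop.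

Lemma asbP (P : Prop) : asb P = true <-> P.
Proof. rewrite /asb; case: excluded_middle_informative => //; split => //. Qed.

Lemma LangP w : Lang X w <-> exists x i, X x /\ occurs_at x i w.
Proof. exact: asbP. Qed.

Lemma occ_cons (x : config A) i a w : occurs_at x i (a :: w) <-> x i = a /\ occurs_at x (i + 1) w.
Proof.
rewrite /occurs_at /=.
have -> : [seq x (i + Z.of_nat k)%Z | k <- iota 1 (size w)] =
          [seq x ((i + 1) + Z.of_nat k)%Z | k <- iota 0 (size w)].
  rewrite (iotaDl 1 0) -map_comp; apply: eq_map => k /=.
  by congr x; rewrite (_ : Z.pos _ = Z.of_nat k.+1) // Nat2Z.inj_succ; lia.
rewrite Z.add_0_r; split; [by case=> -> ->| by case=> -> ->].
Qed.

Lemma occ_cat (x : config A) i (w u : seq A) : occurs_at x i (w ++ u) -> occurs_at x i w.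
Proof.
rewrite /occurs_at size_cat iotaD map_cat => /eqP.
rewrite eqseq_cat; last by rewrite size_map size_iota.
by case/andP => /eqP.
Qed.

Lemma Lang_tail a w : Lang X (a :: w) -> Lang X w.
Proof. move/LangP=> [x [i [Xx /occ_cons [_ H]]]]; apply/LangP; by exists x, (i+1)%Z. Qed.

Lemma Lang_cat w u : Lang X (w ++ u) -> Lang X w.
Proof. move/LangP=> [x [i [Xx /occ_cat H]]]; apply/LangP; by exists x, i. Qed.

Lemma Lang_belast w b : Lang X (rcons w b) -> Lang X w.
Proof. rewrite -cats1; exact: Lang_cat. Qed.

Lemma Lang_left w : Lang X w -> exists a, Lang X (a :: w).
Proof.
move/LangP=> [x [i [Xx H]]]; exists (x (i - 1)%Z); apply/LangP.
exists x, (i - 1)%Z; split => //; apply/occ_cons; split => //.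
by rewrite Z.sub_add.
Qed.

Lemma L1_nil w : ~~ Lang X w -> L1 X w = set0.
Proof.
move=> H; apply/setP => a; rewrite !inE; apply/negP => /Lang_tail.
by rewrite (negbTE H).
Qed.

Lemma ell_nil w : ~~ Lang X w -> ell X w = 0.
Proof. by move/L1_nil; rewrite /ell => ->; rewrite cards0. Qed.

Lemma L1_rcons w b : L1 X (rcons w b) \subset L1 X w.
Proof.
apply/subsetP => a; rewrite !inE -rcons_cons; exact: Lang_belast.
Qed.

Lemma ell_rcons w b : ell X (rcons w b) <= ell X w.
Proof. exact: subset_leq_card (L1_rcons w b). Qed.

End Lang.


Definition acyc (S : finType) (r : rel S) :=
  forall c : seq S, uniq c -> 3 <= size c -> ~~ cycle r c.

Lemma mk_cycle (S : finType) (r : rel S) x p u :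
  symmetric r -> path r x p -> uniq (x :: p) -> u \in p -> r x u -> u != head x p ->
  exists c, [/\ uniq c, 3 <= size c & cycle r c].
Proof.
move=> sym pp up H; case/splitPr: H pp up => p1 p2 pp up rxu uh.
exists (x :: rcons p1 u); split.
- apply: subseq_uniq up; rewrite -cats1 -cat_cons.
  by apply: (@cat_subseq _ (x :: p1) [:: u] (x :: p1) (u :: p2)); rewrite ?subseq_refl ?sub1seq ?mem_head.
- case: p1 pp up uh => [|z p1] //=; first by rewrite eqxx.
  by rewrite size_rcons.
- rewrite /= rcons_path -cats1 cat_path /=.
  move: pp; rewrite cat_path /= => /and3P [-> -> _] /=.
  by rewrite last_cat /= sym rxu.
Qed.

Lemma leaf_exists (S : finType) (r : rel S) x0 y0 :
  symmetric r -> irreflexive r -> acyc r -> r x0 y0 ->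
  exists v u, r v u /\ forall u', r v u' -> u' = u.
Proof.
move=> sym irr ac r0.
apply: NNPP => Hn.
have H : forall v u, r v u -> exists u', r v u' /\ u' != u.
  move=> v u rvu; apply: NNPP => H2; apply: Hn; exists v, u; split => // u' ru'.
  apply: NNPP => ne; apply: H2; exists u'; split => //; exact/eqP.
have Hk : forall k, exists x p, [/\ path r x p, uniq (x :: p) & size p = k.+1].
  elim=> [|k [x [p [pp up sp]]]].
    exists x0, [:: y0]; split => //=; rewrite ?r0 // !inE andbT.
    apply/eqP => e; move: r0; rewrite e; by rewrite irr.
  case: p pp up sp => [//|y q] pp up sp.
  have rxy : r x y by case/andP: pp.
  have [u [rxu uy]] := H x y rxy.
  case: (boolP (u \in x :: y :: q)) => ux.
    exfalso.
    have ux' : u != x by apply/eqP => e; move: rxu; rewrite e irr.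
    move: ux; rewrite in_cons (negbTE ux') /= => uyq.
    have [c [uc sc cc]] := mk_cycle sym pp up uyq rxu uy.
    by move: (ac c uc sc); rewrite cc.
  exists u, (x :: y :: q); split => //=.
  - by rewrite sym rxu.
  - by rewrite ux.
  - by move: sp => /= ->.
have [x [p [_ up sp]]] := Hk #|S|.
have := max_card (mem (x :: p)).
rewrite (card_uniqP up) /= sp; by move/(leq_trans (leqnSn _)); rewrite ltnn.
Qed.

Lemma cycle_nbrs (S : finType) (r : rel S) c v :
  symmetric r -> uniq c -> 3 <= size c -> cycle r c -> v \in c ->
  exists u1 u2, [/\ u1 \in c, u2 \in c, u1 != u2, r v u1 & r v u2].
Proof.
move=> sym uc sc cc /rot_to [i s' e].
have uc' : uniq (v :: s') by rewrite -e rot_uniq.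
have cc' : cycle r (v :: s') by rewrite -e rot_cycle.
have sc' : 3 <= size (v :: s') by rewrite -e size_rot.
have mem' : forall z, z \in v :: s' -> z \in c by move=> z; rewrite -e mem_rot.
clear e.
case: s' uc' cc' sc' mem' => [|y [|z t]] //= uc' cc' _ mem'.
exists y, (last z t); split.
- by apply: mem'; rewrite !inE eqxx orbT.
- by apply: mem'; rewrite in_cons (in_cons y) mem_last !orbT.
- move: uc' => /and3P [_ yn _]; apply/eqP => e'; move: yn; rewrite e'.
  by rewrite mem_last.
- by case/andP: cc'.
- move: cc'; rewrite /= rcons_path => /andP [_] /and3P [_ _]; by rewrite sym.
Qed.


Section Bip.
Variable T : finType.

Definition bgr (L R : {set T}) (E : T -> T -> bool) : rel (T + T) :=
  fun u v => match u, v with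
  | inl a, inr b => [&& a \in L, b \in R & E a b]
  | inr b, inl a => [&& a \in L, b \in R & E a b]
  | _, _ => false end.

Definition Nb (L : {set T}) (E : T -> T -> bool) b := [set a in L | E a b].

Lemma bgr_sym L R E : symmetric (bgr L R E).
Proof. by case=> [a|b] [a'|b']. Qed.

Lemma bgr_irr L R E : irreflexive (bgr L R E).
Proof. by case. Qed.

Lemma acyc_sub (L R L' R' : {set T}) (E : T -> T -> bool) : L' \subset L -> R' \subset R ->
  acyc (bgr L R E) -> acyc (bgr L' R' E).
Proof.
move=> sL sR ac c uc sc; apply/negP => cc; move: (ac c uc sc); rewrite (sub_cycle _ cc) //.
case=> [a|b] [a'|b'] //= /and3P [h1 h2 ->]; by rewrite (subsetP sL _ h1) (subsetP sR _ h2).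
Qed.

Lemma card2 (S : {set T}) x y : x \in S -> y \in S -> x != y -> 1 < #|S|.
Proof.
move=> xS yS xy; rewrite (cardsD1 x) xS ltnS card_gt0; apply/set0Pn; exists y.
by rewrite !inE eq_sym xy.
Qed.

Lemma other (S : {set T}) x : 1 < #|S| -> exists2 y, y \in S & y != x.
Proof.
move=> h; have : 0 < #|S :\ x|.
  by move: h; rewrite (cardsD1 x); case: (x \in S) => /=; lia.
rewrite card_gt0 => /set0Pn [y]; rewrite !inE => /andP [yx yS]; by exists y.
Qed.

Lemma forest_bound (E : T -> T -> bool) n : forall L R : {set T}, #|L| + #|R| <= n ->
  (forall b, b \in R -> exists2 a, a \in L & E a b) ->
  acyc (bgr L R E) -> L != set0 ->
  \sum_(b in R) (#|Nb L E b|).-1 <= (#|L|).-1.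
Proof.
elim: n => [|n IH] L R.
  by move=> h _ _; rewrite -card_gt0; move: h; case: #|L|.
move=> Hs HR ac HL.
case: (set_0Vmem R) => [->|[b0 b0R]]; first by rewrite big_set0.
case: (boolP [exists b in R, #|Nb L E b| <= 1]).
  case/existsP => b /andP [bR hb].
  rewrite (big_setD1 b bR) /=.
  have -> : (#|Nb L E b|).-1 = 0 by move: hb; case: #|_| => [|[]].
  rewrite add0n; apply: IH => //.
  - by move: Hs; rewrite (cardsD1 b R) bR; lia.
  - by move=> b'; rewrite !inE => /andP [_ /HR].
  - by apply: acyc_sub ac => //; apply: subsetDl.
move/existsPn => H2.
have big2 : forall b, b \in R -> 1 < #|Nb L E b|.
  by move=> b bR; move: (H2 b); rewrite bR /= ltnNge.
have [a0 a0L Ea0] := HR b0 b0R.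
have r0 : bgr L R E (inl a0) (inr b0) by rewrite /= a0L b0R Ea0.
have [v [u [rvu Hu]]] := leaf_exists (bgr_sym L R E) (bgr_irr L R E) ac r0.
case: v u rvu Hu => [a|b] [a'|b'] //= /and3P [h1 h2 h3] Hu.
  have aL := h1; have b'R := h2; have Eab := h3.
  set L' := L :\ a.
  have notin : forall b, b \in R -> b != b' -> a \notin Nb L E b.
    move=> b bR bb; rewrite !inE; apply/negP => /andP [_ Eb].
    have := Hu (inr b); rewrite /= aL bR Eb => /(_ isT) [] /eqP; by rewrite (negbTE bb).
  have eqN : forall b, b \in R -> b != b' -> Nb L' E b = Nb L E b.
    move=> b bR bb; apply/setP => x; rewrite !inE.
    case: (eqVneq x a) => [->|] //=; have := notin b bR bb; rewrite !inE => /negbTE -> //.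
  have Nb' : Nb L' E b' = Nb L E b' :\ a.
    by apply/setP => x; rewrite !inE andbA.
  have aN : a \in Nb L E b' by rewrite !inE aL Eab.
  have cN : #|Nb L' E b'| = (#|Nb L E b'|).-1.
    by rewrite Nb' (cardsD1 a (Nb L E b')) aN.
  have b2 := big2 b' b'R.
  have cL : #|L| = #|L'|.+1 by rewrite (cardsD1 a L) aL.
  have NL : #|Nb L E b'| <= #|L| by apply: subset_leq_card; apply/subsetP => x; rewrite !inE => /andP[].
  have IH' := IH L' R.
  have := IH' _ _ _ _.
  move=> {}IH'.
  have HR' : forall b, b \in R -> exists2 a0, a0 \in L' & E a0 b.
    move=> b bR'; have [y yN ya] := other a (big2 b bR').
    move: yN; rewrite !inE => /andP [yL Ey]; exists y => //; by rewrite !inE ya yL.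
  have L'n : L' != set0.
    have [y yN ya] := other a b2; apply/set0Pn; exists y.
    move: yN; rewrite !inE => /andP [yL _]; by rewrite ya yL.
  have ac' : acyc (bgr L' R E) by apply: acyc_sub ac => //; apply: subsetDl.
  have := IH' _ HR' ac' L'n.
  have Hs' : #|L'| + #|R| <= n by move: Hs; rewrite cL; lia.
  move=> /(_ Hs').
  rewrite (big_setD1 b' b'R) (big_setD1 b' b'R) /= cN.
  rewrite (eq_bigr (fun b => (#|Nb L E b|).-1)); last first.
    by move=> b; rewrite !inE => /andP [bb bR']; rewrite eqN.
  move: cL b2 NL; lia.
(* leaf b with unique neighbour a' : impossible *)
have bR := h2.
have [y yN ya] := other a' (big2 b bR).
move: yN; rewrite !inE => /andP [yL Ey].
have := Hu (inl y); rewrite /= yL bR Ey => /(_ isT) [] /eqP; by rewrite (negbTE ya).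
Qed.

Lemma conn_branch (L R : {set T}) (E : T -> T -> bool) a a' : a \in L -> a' \in L -> a != a' ->
  connect (bgr L R E) (inl a) (inl a') ->
  exists b, [/\ b \in R, a \in Nb L E b & 1 < #|Nb L E b|].
Proof.
move=> aL a'L aa' cn.
case: (boolP [exists b in R, (a \in Nb L E b) && (1 < #|Nb L E b|)]).
  by case/existsP => b /and3P [bR h1 h2]; exists b.
move/existsPn => H.
pose S := fun u => match u with inl x => x == a | inr b => (b \in R) && E a b end.
have cl : forall u v, bgr L R E u v -> S u -> S v.
  case=> [x|b] [y|b'] //=.
    by case/and3P => _ -> Exb /eqP e; rewrite -e Exb.
  case/and3P => yL bR Eyb /andP [_ Eab]; apply/negPn/negP => ya.
  move: (H b); rewrite bR /= !inE aL Eab /=.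
  by rewrite (card2 (x := y) (y := a)) // !inE ?yL ?Eyb ?aL ?Eab.
case/connectP: cn => p pp e.
have gen : forall u q, path (bgr L R E) u q -> S u -> S (last u q).
  move=> u q; elim: q u => [|z q IHq] u //= /andP [ruz pq] Su.
  exact: IHq pq (cl _ _ ruz Su).
have := gen _ _ pp (eqxx a); rewrite -e /= => /eqP ea.
by move: aa'; rewrite ea eqxx.
Qed.
Lemma star_acyc (L R : {set T}) (E : T -> T -> bool) b0 :
  (forall b, b != b0 -> #|Nb L E b| <= 1) -> acyc (bgr L R E).
Proof.
move=> H c uc sc; apply/negP => cc.
have sym := bgr_sym L R E.
have Hr : forall b, inr b \in c -> b = b0.
  move=> b bc; apply/eqP; apply/negP => /negP bb.
  have [[a1|b1] [[a2|b2] [u1c u2c u12 r1 r2]]] := cycle_nbrs sym uc sc cc bc => //.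
  move: r1 r2 => /and3P [a1L _ E1] /and3P [a2L _ E2].
  have c2 : 1 < #|Nb L E b|.
    apply: (card2 (x := a1) (y := a2)); rewrite ?inE ?a1L ?a2L ?E1 ?E2 //.
  by move: (H b bb); rewrite leqNgt c2.
have Hl : forall a, inl a \in c -> False.
  move=> a ac.
  have [[a1|b1] [[a2|b2] [u1c u2c u12 r1 r2]]] := cycle_nbrs sym uc sc cc ac => //.
  move: u12; by rewrite (Hr _ u1c) (Hr _ u2c) eqxx.
case: c uc sc cc Hr Hl => [|[a|b] c] // uc sc cc Hr Hl.
  by apply: (Hl a); rewrite mem_head.
have [[a1|b1] [u2 [u1c _ _ r1 _]]] := cycle_nbrs sym uc sc cc (mem_head (inr b) c).
  exact: Hl u1c.
by [].
Qed.

End Bip.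


Section Main.
Variable A : finType.
Variable X : config A -> Prop.

Definition Eg (w : seq A) := fun a b => Lang X (a :: rcons w b).

Lemma ext_rel w :
  [rel u v | [&& ext_vert X w u, ext_vert X w v & ext_edge X w u v]] =2
  bgr (L1 X w) (R1 X w) (Eg w).
Proof. case=> [a|b] [a'|b'] /=; rewrite ?andbF //; by rewrite andbCA. Qed.

Lemma Nb_L1 w b : Nb (L1 X w) (Eg w) b = L1 X (rcons w b).
Proof.
apply/setP => a; rewrite !inE /Eg; case h: (Lang X (a :: rcons w b)); rewrite ?andbF ?andbT //.
by move: h; rewrite -rcons_cons => /Lang_belast.
Qed.

Lemma Lang_rcons_L1 w a b : Lang X (a :: rcons w b) -> a \in L1 X w.
Proof. by rewrite inE -rcons_cons => /Lang_belast. Qed.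

Lemma ell_nil_rcons w b : ~~ Lang X w -> ell X (rcons w b) = 0.
Proof. by move=> h; apply: ell_nil; apply: contra h => /Lang_belast. Qed.

Lemma tree_acyc w : ext_tree X w -> acyc (bgr (L1 X w) (R1 X w) (Eg w)).
Proof. case=> _ [_ ac] c uc sc; rewrite -(eq_cycle (ext_rel w)); exact: ac. Qed.

Lemma tree_sum w : ext_tree X w -> Lang X w ->
  \sum_(b : A) (ell X (rcons w b)).-1 <= (ell X w).-1.
Proof.
move=> tr Lw.
rewrite (bigID (fun b => b \in R1 X w)) /= [X in _ + X]big1 ?addn0; last first.
  move=> b; rewrite inE => h; by rewrite ell_nil.
rewrite (eq_bigr (fun b => (#|Nb (L1 X w) (Eg w) b|).-1)); last first.
  by move=> b _; rewrite Nb_L1.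
apply: (@forest_bound _ _ (#|L1 X w| + #|R1 X w|)) => //.
- move=> b; rewrite inE => /Lang_left [a h]; exists a => //; exact: Lang_rcons_L1 h.
- exact: tree_acyc.
- have [a h] := Lang_left Lw; apply/set0Pn; exists a; by rewrite inE.
Qed.

Lemma tree_branch w a a' : ext_tree X w -> a \in L1 X w -> a' \in L1 X w -> a != a' ->
  exists b, a \in L1 X (rcons w b) /\ 1 < ell X (rcons w b).
Proof.
case=> _ [cn _] aL a'L aa'.
have := cn (inl a) (inl a') aL a'L; rewrite (eq_connect (ext_rel w)) => c.
have [b [_ h1 h2]] := conn_branch aL a'L aa' c.
by exists b; move: h1 h2; rewrite /ell Nb_L1.
Qed.

Lemma LS_branch w : ext_tree X w -> left_special X w ->
  exists b, left_special X (rcons w b).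
Proof.
move=> tr /andP [Lw l2].
have [a aL] : exists a, a \in L1 X w.
  by have [a h] := Lang_left Lw; exists a; rewrite inE.
have [a' a'L a'a] := other a l2.
have aa' : a != a' by rewrite eq_sym.
have [b [h1 h2]] := tree_branch tr aL a'L aa'.
exists b; rewrite /left_special h2 andbT; move: h1; rewrite inE; exact: Lang_tail.
Qed.


Fixpoint words n : seq (seq A) :=
  if n is k.+1 then [seq rcons w b | w <- words k, b <- enum A] else [:: [::]].

Lemma words_size n w : w \in words n -> size w = n.
Proof.
elim: n w => [|n IH] w /=; first by rewrite inE => /eqP ->.
by case/allpairsPdep => [w' [b [/IH <- _ ->]]]; rewrite size_rcons.
Qed.

Lemma mem_words w : w \in words (size w).
Proof.
elim/last_ind: w => [|w b IH]; first by rewrite /= mem_seq1.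
rewrite size_rcons /=; apply/allpairsPdep; exists w, b; by rewrite IH mem_enum.
Qed.

Lemma sum_words n (F : seq A -> nat) :
  \sum_(w <- words n.+1) F w = \sum_(w <- words n) \sum_(b : A) F (rcons w b).
Proof. by rewrite /= big_allpairs_dep; apply: eq_bigr => w _; rewrite big_enum. Qed.

Definition Tn n := \sum_(w <- words n) (ell X w).-1.
Definition cn n := \sum_(w <- words n) (left_special X w : nat).

Lemma sum_card (P : pred A) : \sum_(b : A) (P b : nat) = #|[set b | P b]|.
Proof.
rewrite -sum1_card [in RHS]big_mkcond /=; apply: eq_bigr => b _; rewrite inE; by case: (P b).
Qed.

Lemma sum_eq_le (s : seq (seq A)) (F G : seq A -> nat) :
  (forall x, x \in s -> F x <= G x) -> \sum_(x <- s) F x = \sum_(x <- s) G x ->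
  forall x, x \in s -> F x = G x.
Proof.
elim: s => [|y s IH] //= H; rewrite !big_cons => e x.
have h1 := H y (mem_head y s).
have h2 : \sum_(x <- s) F x <= \sum_(x <- s) G x.
  by rewrite big_seq_cond [X in _ <= X]big_seq_cond; apply: leq_sum => z /andP [zs _];
     apply: H; rewrite inE zs orbT.
rewrite inE => /orP [/eqP ->|xs]; first by lia.
apply: IH xs => //; first by move=> z zs; apply: H; rewrite inE zs orbT.
lia.
Qed.

Lemma stab (f : nat -> nat) m B :
  (forall k, m <= k -> f k <= f k.+1) -> (forall k, m <= k -> f k <= B) ->
  exists N, m <= N /\ forall k, N <= k -> f k = f N.
Proof.
move=> mono bd.
have mt : forall i k, i <= k -> m <= i -> f i <= f k.
  move=> i k ik mi; elim: k ik => [|k IHk]; first by rewrite leqn0 => /eqP ->.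
  rewrite leq_eqVlt => /orP [/eqP -> //|]; rewrite ltnS => ik.
  apply: leq_trans (IHk ik) (mono _ _); exact: leq_trans mi ik.
suff: forall d i, m <= i -> B - f i <= d -> exists N, i <= N /\ forall k, N <= k -> f k = f N.
  move=> /(_ (B - f m) m (leqnn m) (leqnn _)) [N [mN h]]; by exists N.
elim=> [|d IH] i mi hd.
  exists i; split => // k ik; have := mt i k ik mi; have := bd k (leq_trans mi ik).
  have := bd i mi; lia.
case: (classic (forall k, i <= k -> f k = f i)) => [h|]; first by exists i.
move=> /not_all_ex_not [k] Hk; have [ik nk] := imply_to_and _ _ Hk.
have := mt i k ik mi; have := bd k (leq_trans mi ik) => h1 h2.
have [N [kN HN]] := IH k (leq_trans mi ik) (ltac:(lia)).
exists N; split => //; exact: leq_trans ik kN.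
Qed.


Lemma leq_sum_in (s : seq (seq A)) (F G : seq A -> nat) :
  (forall x, x \in s -> F x <= G x) -> \sum_(x <- s) F x <= \sum_(x <- s) G x.
Proof. move=> H; rewrite big_seq [X in _ <= X]big_seq; exact: leq_sum. Qed.

Lemma forward m : eventually_dendric_thr X m ->
  exists n : nat, forall w : seq A, in_LS_ge X n w ->
     exists b : A, [/\ in_LS X (rcons w b),
                       (forall b' : A, in_LS X (rcons w b') -> b' = b) &
                       ell X (rcons w b) = ell X w].
Proof.
move=> thr.
have LSle : forall w, m <= size w ->
    (left_special X w : nat) <= \sum_(b : A) (left_special X (rcons w b) : nat).
  move=> w mw; case h: (left_special X w) => //=.
  have Lw : Lang X w by case/andP: h.
  have [b hb] := LS_branch (thr w Lw mw) h.
  by rewrite (bigD1 b) //= hb.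
have Tstep : forall k, m <= k -> Tn k.+1 <= Tn k.
  move=> k mk; rewrite /Tn sum_words; apply: leq_sum_in => w wk.
  case: (boolP (Lang X w)) => Lw.
    apply: tree_sum => //; apply: thr => //; by rewrite (words_size wk).
  rewrite big1 // => b _; by rewrite ell_nil_rcons.
have Tm : forall k, m <= k -> Tn k <= Tn m.
  elim=> [|k IH]; first by rewrite leqn0 => /eqP ->.
  rewrite leq_eqVlt => /orP [/eqP <- //|]; rewrite ltnS => mk.
  exact: leq_trans (Tstep k mk) (IH mk).
have cT : forall k, cn k <= Tn k.
  move=> k; rewrite /cn /Tn; apply: leq_sum => w _.
  case h: (left_special X w) => //=; move: h => /andP [_]; lia.
have cmono : forall k, m <= k -> cn k <= cn k.+1.
  move=> k mk; rewrite /cn sum_words; apply: leq_sum_in => w wk.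
  apply: LSle; by rewrite (words_size wk).
have [N [mN HN]] := stab cmono (fun k mk => leq_trans (cT k) (Tm k mk)).
exists N => w /andP [LSw Nw].
have Lw : Lang X w by case/andP: LSw.
have mw : m <= size w by apply: leq_trans mN Nw.
have tr := thr w Lw mw.
have e : cn (size w).+1 = cn (size w).
  by rewrite (HN _ Nw) (HN (size w).+1 (leq_trans Nw (leqnSn _))).
move: e; rewrite /cn sum_words => e.
have := sum_eq_le (s := words (size w)) (F := fun w => (left_special X w : nat))
  (G := fun w => \sum_(b : A) (left_special X (rcons w b) : nat)).
have le' : forall x, x \in words (size w) -> (left_special X x : nat) <=
    \sum_(b : A) (left_special X (rcons x b) : nat).
  by move=> x xw; apply: LSle; rewrite (words_size xw).
move=> /(_ le' (esym e) w (mem_words w)) /=; rewrite LSw sum_card => /esym/eqP.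
case/cards1P => b0 Sb.
have inS : forall b, left_special X (rcons w b) = (b == b0).
  by move=> b; rewrite -in_set1 -Sb inE.
have LSb0 : left_special X (rcons w b0) by rewrite inS.
exists b0; split.
- by rewrite /in_LS LSb0 size_rcons.
- by move=> b' /andP [h _]; apply/eqP; rewrite -inS.
- apply/eqP; rewrite eqn_leq ell_rcons /=; apply: subset_leq_card; apply/subsetP => a aL.
  have l2 : 1 < ell X w by case/andP: LSw.
  have [a' a'L a'a] := other a l2.
  have aa' : a != a' by rewrite eq_sym.
  have [b [h1 h2]] := tree_branch tr aL a'L aa'.
  have : left_special X (rcons w b).
    rewrite /left_special h2 andbT; move: h1; rewrite inE; exact: Lang_tail.
  by rewrite inS => /eqP <-.
Qed.


Lemma hub_conn (T : finType) (r : rel T) (V : pred T) h : symmetric r ->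
  (forall u, V u -> connect r u h) -> forall u v, V u -> V v -> connect r u v.
Proof.
move=> sym H u v Vu Vv; apply: connect_trans (H u Vu) _.
by rewrite (sym_connect_sym sym); apply: H.
Qed.

Lemma backward n :
  (forall w : seq A, in_LS_ge X n w ->
     exists b : A, [/\ in_LS X (rcons w b),
                       (forall b' : A, in_LS X (rcons w b') -> b' = b) &
                       ell X (rcons w b) = ell X w]) ->
  eventually_dendric_thr X n.
Proof.
move=> H w Lw nw.
have [a0 a0L] : exists a, a \in L1 X w.
  by have [a h] := Lang_left Lw; exists a; rewrite inE.
suff [b0 [h1 h2]] : exists b0, (forall b, b != b0 -> ell X (rcons w b) <= 1) /\
   exists h, forall u, ext_vert X w u ->
     connect (bgr (L1 X w) (R1 X w) (Eg w)) u h.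
  split; first by exists (inl a0).
  split.
    move=> u v Vu Vv; rewrite (eq_connect (ext_rel w)).
    case: h2 => h Hh; exact: (hub_conn (bgr_sym _ _ _) Hh).
  move=> c uc sc; rewrite (eq_cycle (ext_rel w)).
  apply: (@star_acyc _ _ _ _ b0) => // b bb; rewrite Nb_L1; exact: h1.
have rightleft : forall b, b \in R1 X w -> exists2 a, a \in L1 X w &
    bgr (L1 X w) (R1 X w) (Eg w) (inr b) (inl a).
  move=> b bR; have := bR; rewrite inE => /Lang_left [a ha].
  exists a; first exact: Lang_rcons_L1 ha.
  by rewrite /= (Lang_rcons_L1 ha) bR /Eg ha.
case: (boolP (left_special X w)) => LSw.
  have hw : in_LS_ge X n w by rewrite /in_LS_ge LSw.
  have [b0 [/andP [LSb0 _] ub el]] := H w hw.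
  have Lb0 : Lang X (rcons w b0) by case/andP: LSb0.
  have eqL : L1 X (rcons w b0) = L1 X w.
    by apply/eqP; rewrite eqEcard L1_rcons /= -/(ell X w) -el leqnn.
  have hubl : forall a, a \in L1 X w ->
      bgr (L1 X w) (R1 X w) (Eg w) (inl a) (inr b0).
    move=> a aL; rewrite /= aL inE Lb0 /Eg /=; move: aL; by rewrite -eqL inE.
  exists b0; split.
    move=> b bb; case h: (left_special X (rcons w b)).
      by move: (ub b); rewrite /in_LS h size_rcons => /(_ isT) /eqP; rewrite (negbTE bb).
    move: h; rewrite /left_special; case: (boolP (Lang X (rcons w b))) => /= Lb.
      by move/negbT; rewrite -ltnNge ltnS.
    by rewrite ell_nil.
  exists (inr b0); case=> [a|b] /= V.
    by apply: connect1; apply: hubl.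
  have [a aL e] := rightleft b V.
  by apply: connect_trans (connect1 e) (connect1 (hubl a aL)).
have l1 : ell X w <= 1 by move: LSw; rewrite /left_special Lw /= -ltnNge ltnS.
have uniqa : forall a, a \in L1 X w -> a = a0.
  move=> a aL; apply/eqP; apply: negbNE; apply/negP => aa.
  by move: l1; rewrite leqNgt (card2 aL a0L aa).
exists a0; split.
  by move=> b _; apply: leq_trans l1; apply: ell_rcons.
exists (inl a0); case=> [a|b] /= V.
  by rewrite (uniqa a V) connect0.
have [a aL e] := rightleft b V.
by apply: connect1; rewrite -(uniqa a aL).
Qed.

End Main.


Theorem mainTheorem3 (A : finType) (X : config A -> Prop) :
  shift_space X ->
  (eventually_dendric X <->
   exists n : nat, forall w : seq A, in_LS_ge X n w ->
     exists b : A, [/\ in_LS X (rcons w b),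
                       (forall b' : A, in_LS X (rcons w b') -> b' = b) &
                       ell X (rcons w b) = ell X w]).
Proof.
move=> _; split => [[m thr]|[n H]]; first exact: forward thr.
by exists n; exact: backward H.
Qed.
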